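(* Suppose $G(z)=\sum_{n\ge0}a_n^2z^n$ is type II admissible. Then there exist $\varepsilon\in(0,1)$, $C>0$ and $t_0$ such that for all $t\ge t_0$ and all integers $n\ge0$, \[ \left|a_n^2e^{nt}\frac{\sqrt{2\pi B(t)}}{H(t)}-\exp\left(-\frac{(n-A(t))^2}{2B(t)}\right)\right|\le\frac{C}{B^{\varepsilon}(t)}. \]
   Context: $G$ is entire with $a_n\ge0$, infinitely many non-zero; $H(t)=G(e^t)$, $A=H'/H$, $B=A'$. $G$ is type II admissible if: (1) $B$ is non-decreasing and unbounded; (2) $A(t)=O(B^2(t))$ as $t\to\infty$; (3) there exist constants $C_G>2$ and $\varepsilon>0$ such that, with $\delta(t)=\sqrt{C_G\log B(t)/B(t)}$, for all sufficiently large $t$ and all $|\theta|\le\delta(t)$, $\log\frac{H(t+i\theta)}{H(t)}=i\theta A(t)-\frac12\theta^2B(t)+\Delta(t,\theta)$ with $|\Delta(t,\theta)|\le B^{3/2-\varepsilon}(t)|\theta|^3$; (4) $|H(t+i\theta)|=O(H(t)/B(t))$ as $t\to\infty$, uniformly in $\delta(t)\le|\theta|\le\pi$. *)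

(* Defs.v *)
From Stdlib Require Import Reals.
From Coquelicot Require Import Coquelicot.
Open Scope R_scope.

Definition cexp (z : C) : C :=
  (exp (Re z) * cos (Im z), exp (Re z) * sin (Im z)).

Definition Hr (c : nat -> R) (t : R) : R := PSeries c (exp t).

(* H(t + i theta) = G(e^{t+i theta}) = sum_n c n e^{n t} e^{i n theta},
   given by its real and imaginary parts. *)
Definition Hc (c : nat -> R) (t theta : R) : C :=
  (Series (fun n => c n * exp (INR n * t) * cos (INR n * theta)),
   Series (fun n => c n * exp (INR n * t) * sin (INR n * theta))).

Definition Af (c : nat -> R) (t : R) : R := Derive (Hr c) t / Hr c t.
Definition Bf (c : nat -> R) (t : R) : R := Derive (Af c) t.

Definition deltaf (c : nat -> R) (CG t : R) : R :=
  sqrt (CG * ln (Bf c t) / Bf c t).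

Definition type_II_admissible (c : nat -> R) : Prop :=
  CV_radius c = p_infty /\
  (forall n, 0 <= c n) /\
  (forall N, exists n, (N <= n)%nat /\ c n <> 0) /\
  (forall t1 t2, t1 <= t2 -> Bf c t1 <= Bf c t2) /\
  (forall M, exists t, M < Bf c t) /\
  (exists K T, forall t, T <= t -> Rabs (Af c t) <= K * (Bf c t) ^ 2) /\
  (* (3) and (4), with the same constant C_G (hence the same delta) *)
  (exists CG eps, 2 < CG /\ 0 < eps /\
     (* (3) local expansion of log(H(t+i theta)/H(t)) *)
     (exists T, forall t theta, T <= t -> Rabs theta <= deltaf c CG t ->
       exists Delta : C,
         Cdiv (Hc c t theta) (RtoC (Hr c t)) =
           cexp (Cplus (- theta ^ 2 * Bf c t / 2, theta * Af c t) Delta) /\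
         Cmod Delta <= Rpower (Bf c t) (3 / 2 - eps) * Rabs theta ^ 3) /\
     (exists K T, forall t theta, T <= t ->
        deltaf c CG t <= Rabs theta -> Rabs theta <= PI ->
        Cmod (Hc c t theta) <= K * (Hr c t / Bf c t))).

(* Main.v *)
Require Import Defs.
From Stdlib Require Import Reals Lra Psatz.
From Coquelicot Require Import Coquelicot.
Open Scope R_scope.


Lemma cont_of_der (f : R -> R) x : ex_derive f x -> continuous f x.
Proof. intros H; apply (@ex_derive_continuous R_AbsRing R_NormedModule); exact H. Qed.

Lemma exRc (f : R -> R) a b : (forall z, Rmin a b <= z <= Rmax a b -> ex_derive f z) -> ex_RInt f a b.
Proof. intros H. apply (@ex_RInt_continuous R_CompleteNormedModule). intros z Hz. apply cont_of_der, H, Hz. Qed.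

Lemma exRc_abs (f : R -> R) a b : (forall z, Rmin a b <= z <= Rmax a b -> ex_derive f z) -> ex_RInt (fun t => Rabs (f t)) a b.
Proof. intros H. apply (@ex_RInt_continuous R_CompleteNormedModule). intros z Hz.
  apply continuous_Rabs_comp. apply cont_of_der, H, Hz. Qed.

Lemma RInt_correctR (f : R -> R) a b : ex_RInt f a b -> is_RInt f a b (RInt f a b).
Proof. apply (@RInt_correct R_CompleteNormedModule). Qed.

Ltac fix_exp := match goal with |- context [exp ?a] => match goal with |- context [exp ?b] =>
  assert_fails (constr_eq a b); replace (exp a) with (exp b) by (f_equal; field; repeat split; lra) end end.
Ltac fix_fun f := match goal with |- context [f ?a] => match goal with |- context [f ?b] =>
  assert_fails (constr_eq a b); replace (f a) with (f b) by (f_equal; field) end end.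

Lemma is_RInt_uniqueR (f : R -> R) a b l : is_RInt f a b l -> RInt f a b = l.
Proof. apply (@is_RInt_unique R_CompleteNormedModule). Qed.

Lemma scalR (x y : R) : scal x y = x * y.
Proof. reflexivity. Qed.

Ltac fixeq := match goal with |- @eq _ ?a ?b => change (@eq R a b) end.

Lemma exp_le x y : x <= y -> exp x <= exp y.
Proof. intros H; destruct (Rle_lt_or_eq_dec _ _ H) as [H1|H1]; [apply Rlt_le, exp_increasing; auto| subst; lra]. Qed.

Definition gf b x := RInt (fun t => exp (-(b*t^2)/2)) 0 x.
Definition Kf b x := RInt (fun s => exp (-(b*x^2*(1+s^2))/2) / (1+s^2)) 0 1.

Lemma gauss_ex_RInt b u v : ex_RInt (fun t => exp (-(b*t^2)/2)) u v.
Proof. apply exRc; intros z _; auto_derive; auto. Qed.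

Lemma gf_deriv b x : is_derive (gf b) x (exp (-(b*x^2)/2)).
Proof.
  apply (is_derive_RInt (fun t => exp (-(b*t^2)/2)) (gf b) 0 x).
  - apply filter_forall; intros y. unfold gf. apply RInt_correctR, gauss_ex_RInt.
  - apply cont_of_der; auto_derive; auto.
Qed.

Lemma Kf_ex b y : ex_RInt (fun s => exp (-(b*y^2*(1+s^2))/2) / (1+s^2)) 0 1.
Proof.
  apply exRc; intros z _; auto_derive. nra.
Qed.

Lemma Kf_deriv b x : is_derive (Kf b) x
   (RInt (fun s => -(b*x) * exp (-(b*x^2*(1+s^2))/2)) 0 1).
Proof.
  unfold Kf.
  set (f := fun y s => exp (-(b*y^2*(1+s^2))/2) / (1+s^2)).
  assert (HD : forall u v, Derive (fun z => f z v) u = -(b*u) * exp (-(b*u^2*(1+v^2))/2)).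
  { intros u v. apply is_derive_unique. unfold f. auto_derive.
    - nra.
    - repeat fix_exp. field. nra. }
  replace (RInt (fun s => -(b*x) * exp (-(b*x^2*(1+s^2))/2)) 0 1)
    with (RInt (fun t => Derive (fun u => f u t) x) 0 1).
  2:{ apply RInt_ext. intros; apply HD. }
  apply (is_derive_RInt_param f 0 1 x).
  - apply filter_forall; intros y t _. unfold f. auto_derive. nra.
  - intros t _. eapply continuity_2d_pt_ext.
    { intros u v. symmetry. apply HD. }
    apply continuity_2d_pt_mult.
    + apply continuity_2d_pt_opp. apply continuity_2d_pt_mult.
      apply continuity_2d_pt_const. apply continuity_2d_pt_id1.
    + apply continuity_1d_2d_pt_comp with (f := exp).
      * apply derivable_continuous_pt, derivable_pt_exp.
      * apply continuity_2d_pt_mult; [|apply continuity_2d_pt_const].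
        apply continuity_2d_pt_opp.
        apply continuity_2d_pt_mult; [apply continuity_2d_pt_mult|].
        apply continuity_2d_pt_const.
        simpl. apply continuity_2d_pt_mult. apply continuity_2d_pt_id1.
        apply continuity_2d_pt_mult. apply continuity_2d_pt_id1. apply continuity_2d_pt_const.
        apply continuity_2d_pt_plus. apply continuity_2d_pt_const.
        simpl. apply continuity_2d_pt_mult. apply continuity_2d_pt_id2.
        apply continuity_2d_pt_mult. apply continuity_2d_pt_id2. apply continuity_2d_pt_const.
  - apply filter_forall; intros y. apply Kf_ex.
Qed.

Lemma RInt_zero_fun a b : RInt (fun _ : R => 0) a b = 0.
Proof. rewrite RInt_const. unfold scal; simpl; unfold mult; simpl. ring. Qed.

Lemma RInt_constR a b (c : R) : RInt (fun _ : R => c) a b = (b - a) * c.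
Proof. rewrite RInt_const. reflexivity. Qed.

Lemma deriv_zero_const (F : R -> R) x : (forall y, is_derive F y 0) -> F x = F 0.
Proof.
  intros H.
  assert (H1 : is_RInt (fun _ => 0) 0 x (minus (F x) (F 0))).
  { apply (@is_RInt_derive R_CompleteNormedModule F (fun _ => 0)).
    - intros; apply H.
    - intros; apply continuous_const. }
  apply is_RInt_uniqueR in H1. rewrite RInt_zero_fun in H1.
  unfold minus, plus, opp in H1; simpl in H1. lra.
Qed.

Lemma gf_comp b x : x * RInt (fun s => exp (-(b*(x*s)^2)/2)) 0 1 = gf b x.
Proof.
  unfold gf.
  pose proof (RInt_comp_lin (V := R_CompleteNormedModule) (fun t => exp (-(b*t^2)/2)) x 0 0 1) as E.
  replace (x*0+0) with 0 in E by ring. replace (x*1+0) with x in E by ring.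
  rewrite <- E by apply gauss_ex_RInt.
  rewrite <- (RInt_scal (V := R_CompleteNormedModule)).
  - apply RInt_ext. intros y _. unfold scal; simpl; unfold mult; simpl. f_equal. f_equal. f_equal. ring.
  - apply exRc. intros; auto_derive; auto.
Qed.

Definition Ff b x := gf b x ^ 2 + (2/b) * Kf b x.

Lemma Ff_deriv b x : 0 < b -> is_derive (Ff b) x 0.
Proof.
  intros Hb.
  assert (H : is_derive (Ff b) x (2 * gf b x * exp (-(b*x^2)/2) + (2/b) * RInt (fun s => -(b*x) * exp (-(b*x^2*(1+s^2))/2)) 0 1)).
  { unfold Ff. apply (is_derive_plus (K := R_AbsRing) (V := R_NormedModule)).
    - pose proof (gf_deriv b x) as G.
      replace (2 * gf b x * exp (-(b*x^2)/2)) with (INR 2 * exp (-(b*x^2)/2) * gf b x ^ Nat.pred 2) by (simpl; ring).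
      apply (is_derive_pow (gf b) 2 x). exact G.
    - apply (is_derive_scal (Kf b) x (2/b)). apply Kf_deriv. }
  replace 0 with (2 * gf b x * exp (-(b*x^2)/2) + (2/b) * RInt (fun s => -(b*x) * exp (-(b*x^2*(1+s^2))/2)) 0 1); [exact H|].
  rewrite (RInt_ext _ (fun s => scal (-(b*x) * exp (-(b*x^2)/2)) (exp (-(b*(x*s)^2)/2)))).
  2:{ intros s _. rewrite (Rmult_assoc (- (b*x))), <- exp_plus.
      repeat fix_exp. reflexivity. }
  rewrite (RInt_scal (V := R_CompleteNormedModule)).
  2:{ apply exRc. intros; auto_derive; auto. }
  change (scal ?u ?v) with (u * v). rewrite <- (gf_comp b x). field. lra.
Qed.

Lemma Kf0 b : Kf b 0 = PI / 4.
Proof.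
  unfold Kf. rewrite (RInt_ext _ (fun s => / (1 + s^2))).
  2:{ intros s _. assert (E: -(b*0^2*(1+s^2))/2 = 0) by field. rewrite E, exp_0. fixeq. field. nra. }
  rewrite <- atan_1.
  assert (H : is_RInt (fun s => / (1 + s^2)) 0 1 (minus (atan 1) (atan 0))).
  { apply (@is_RInt_derive R_CompleteNormedModule atan).
    - intros x _. replace (x^2) with (Rsqr x) by (unfold Rsqr; ring). apply is_derive_atan.
    - intros x _. apply cont_of_der. auto_derive. nra. }
  apply is_RInt_uniqueR in H. rewrite H. rewrite atan_0. unfold minus, plus, opp; simpl. ring.
Qed.

Lemma Ff_val b x : 0 < b -> Ff b x = PI / (2*b).
Proof.
  intros Hb. rewrite (deriv_zero_const (Ff b) x) by (intros; apply Ff_deriv; auto).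
  unfold Ff. rewrite Kf0. unfold gf. rewrite RInt_point. unfold zero; simpl. field. lra.
Qed.

Lemma Kf_bounds b x : 0 < b -> 0 <= Kf b x <= exp (-(b*x^2)/2).
Proof.
  intros Hb. unfold Kf. split.
  - apply Rle_trans with (RInt (fun _ => 0) 0 1); [rewrite RInt_zero_fun; lra|]. apply RInt_le. lra.
    apply exRc; intros; auto_derive; auto. apply Kf_ex.
    intros s _. apply Rle_mult_inv_pos. apply Rlt_le, exp_pos. nra.
  - replace (exp (-(b*x^2)/2)) with (RInt (fun _ => exp (-(b*x^2)/2)) 0 1) by (rewrite RInt_constR; fixeq; ring).
    apply RInt_le. lra. apply Kf_ex. apply exRc; intros; auto_derive; auto.
    intros s Hs. apply Rle_trans with (exp (-(b*x^2*(1+s^2))/2)).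
    + unfold Rdiv. rewrite <- (Rmult_1_r (exp _)) at 2. apply Rmult_le_compat_l. apply Rlt_le, exp_pos.
      rewrite <- Rinv_1. apply Rinv_le_contravar. lra. nra.
    + apply exp_le. assert (0 <= b*x^2*s^2) by (apply Rmult_le_pos; [apply Rmult_le_pos|]; nra). nra.
Qed.

Lemma gf_nonneg b x : 0 <= x -> 0 <= gf b x.
Proof.
  intros Hx. unfold gf.
  apply Rle_trans with (RInt (fun _ => 0) 0 x); [rewrite RInt_zero_fun; lra|].
  apply RInt_le; auto. apply exRc; intros; auto_derive; auto. apply gauss_ex_RInt.
  intros; apply Rlt_le, exp_pos.
Qed.

Lemma gf_bound b x : 0 < b -> 0 <= x ->
  Rabs (gf b x - sqrt (PI/(2*b))) <= (2/b) * exp (-(b*x^2)/2) / sqrt (PI/(2*b)).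
Proof.
  intros Hb Hx.
  pose proof (Ff_val b x Hb) as HF. unfold Ff in HF.
  pose proof (Kf_bounds b x Hb) as HK.
  pose proof (gf_nonneg b x Hx) as Hg.
  assert (Hp : 0 < PI/(2*b)) by (apply Rdiv_lt_0_compat; [apply PI_RGT_0|lra]).
  set (s := sqrt (PI/(2*b))) in *.
  assert (Hs : 0 < s) by (apply sqrt_lt_R0; auto).
  assert (Hs2 : s * s = PI/(2*b)) by (apply sqrt_sqrt; lra).
  set (g := gf b x) in *. set (K := Kf b x) in *. set (E := exp (-(b*x^2)/2)) in *.
  assert (Hdiff : (g - s) * (g + s) = - (2/b) * K) by (replace ((g-s)*(g+s)) with (g^2 - s*s) by ring; rewrite Hs2, <- HF; ring).
  assert (Hgs : g - s = - (2/b) * K / (g + s)) by (apply (Rmult_eq_reg_r (g+s)); [rewrite Hdiff; field; repeat split; lra | lra]).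
  rewrite Hgs. rewrite Rabs_div by lra.
  rewrite (Rabs_right (g + s)) by lra.
  assert (H2K : 0 <= (2/b)*K) by (apply Rmult_le_pos; [apply Rlt_le, Rdiv_lt_0_compat; lra | lra]).
  replace (Rabs (- (2/b) * K)) with ((2/b)*K) by (rewrite Rabs_left1; lra).
  unfold Rdiv. apply Rmult_le_compat.
  - apply Rmult_le_pos; [apply Rlt_le, Rmult_lt_0_compat; [lra|apply Rinv_0_lt_compat; lra]|lra].
  - apply Rlt_le, Rinv_0_lt_compat; lra.
  - apply Rmult_le_compat_l; [apply Rlt_le, Rmult_lt_0_compat; [lra|apply Rinv_0_lt_compat; lra]|lra].
  - apply Rinv_le_contravar; lra.
Qed.


Definition Ig b d y := RInt (fun th => exp (-(b*th^2)/2) * cos (th*y)) 0 d.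

Lemma Ig_ex (b y u v : R) : ex_RInt (fun th => exp (-(b*th^2)/2) * cos (th*y)) u v.
Proof. apply exRc; intros; auto_derive; auto. Qed.

Lemma Ig_deriv b d y : is_derive (Ig b d) y
   (RInt (fun th => exp (-(b*th^2)/2) * (-(th * sin (th*y)))) 0 d).
Proof.
  unfold Ig.
  set (f := fun y th => exp (-(b*th^2)/2) * cos (th*y)).
  assert (HD : forall u v, Derive (fun z => f z v) u = exp (-(b*v^2)/2) * (-(v * sin (v*u)))).
  { intros u v. apply is_derive_unique. unfold f. auto_derive; auto. repeat fix_exp. fixeq; ring. }
  replace (RInt (fun th => exp (-(b*th^2)/2) * (-(th * sin (th*y)))) 0 d)
    with (RInt (fun t => Derive (fun u => f u t) y) 0 d).
  2:{ apply RInt_ext. intros; apply HD. }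
  apply (is_derive_RInt_param f 0 d y).
  - apply filter_forall; intros z t _. unfold f. auto_derive. auto.
  - intros t _. eapply continuity_2d_pt_ext.
    { intros u v. symmetry. apply HD. }
    apply continuity_2d_pt_mult.
    + apply continuity_1d_2d_pt_comp with (f := exp).
      * apply derivable_continuous_pt, derivable_pt_exp.
      * apply continuity_2d_pt_mult; [|apply continuity_2d_pt_const].
        apply continuity_2d_pt_opp.
        apply continuity_2d_pt_mult. apply continuity_2d_pt_const.
        simpl. apply continuity_2d_pt_mult. apply continuity_2d_pt_id2.
        apply continuity_2d_pt_mult. apply continuity_2d_pt_id2. apply continuity_2d_pt_const.
    + apply continuity_2d_pt_opp. apply continuity_2d_pt_mult. apply continuity_2d_pt_id2.
      apply continuity_1d_2d_pt_comp with (f := sin).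
      * apply derivable_continuous_pt, derivable_pt_sin.
      * apply continuity_2d_pt_mult. apply continuity_2d_pt_id2. apply continuity_2d_pt_id1.
  - apply filter_forall; intros z. apply Ig_ex.
Qed.

Lemma Ig_ibp b d y : 0 < b ->
  RInt (fun th => exp (-(b*th^2)/2) * (-(th * sin (th*y)))) 0 d
  = (1/b) * (exp (-(b*d^2)/2) * sin (d*y) - y * Ig b d y).
Proof.
  intros Hb.
  set (P := fun th => exp (-(b*th^2)/2) * sin (th*y)).
  set (dP := fun th => -(b*th) * exp (-(b*th^2)/2) * sin (th*y) + y * (exp (-(b*th^2)/2) * cos (th*y))).
  assert (H1 : is_RInt dP 0 d (minus (P d) (P 0))).
  { apply (@is_RInt_derive R_CompleteNormedModule P dP).
    - intros x _. unfold P, dP. auto_derive; auto. repeat fix_exp. fixeq; field.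
    - intros x _. apply cont_of_der. unfold dP. auto_derive. auto. }
  apply is_RInt_uniqueR in H1.
  rewrite (RInt_ext _ (fun th => plus (scal (1/b) (dP th)) (scal (-(y/b)) (exp (-(b*th^2)/2) * cos (th*y))))).
  2:{ intros x _. unfold dP. change (scal ?u ?v) with (u * v). unfold plus; simpl. field. lra. }
  rewrite (RInt_plus (V := R_CompleteNormedModule)).
  2:{ apply exRc; intros; unfold dP, scal; simpl; unfold mult; simpl; auto_derive; auto. }
  2:{ apply exRc; intros; unfold scal; simpl; unfold mult; simpl; auto_derive; auto. }
  rewrite (RInt_scal (V := R_CompleteNormedModule)).
  2:{ apply exRc; intros; unfold dP; auto_derive; auto. }
  rewrite (RInt_scal (V := R_CompleteNormedModule)).
  2:{ apply exRc; intros; auto_derive; auto. }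
  rewrite H1. fold (Ig b d y). unfold P. unfold minus, plus, opp; simpl.
  change (scal ?u ?v) with (u * v).
  replace (0*y) with 0 by ring. rewrite sin_0. fixeq. field. lra.
Qed.

Lemma is_derive_eqv (f : R -> R) x l l' : is_derive f x l -> l = l' -> is_derive f x l'.
Proof. intros H <-; exact H. Qed.

Lemma Ig0 b d : Ig b d 0 = gf b d.
Proof. unfold Ig, gf. apply RInt_ext. intros x _. rewrite Rmult_0_r, cos_0. fixeq; ring. Qed.

Lemma Ig_phi b d y : 0 < b ->
  Ig b d y * exp (y^2/(2*b)) - gf b d =
  RInt (fun s => (1/b) * exp (-(b*d^2)/2) * sin (d*s) * exp (s^2/(2*b))) 0 y.
Proof.
  intros Hb.
  assert (H1 : is_RInt (fun s => (1/b) * exp (-(b*d^2)/2) * sin (d*s) * exp (s^2/(2*b))) 0 y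
     (minus ((fun y => Ig b d y * exp (y^2/(2*b))) y) ((fun y => Ig b d y * exp (y^2/(2*b))) 0))).
  { apply (@is_RInt_derive R_CompleteNormedModule (fun y => Ig b d y * exp (y^2/(2*b)))).
    - intros x _.
      eapply is_derive_eqv.
      + apply (is_derive_mult (K := R_AbsRing) (Ig b d) (fun y => exp (y^2/(2*b)))).
        * apply Ig_deriv.
        * auto_derive. auto. reflexivity.
        * intros; apply Rmult_comm.
      + rewrite Ig_ibp by auto. unfold plus, mult; simpl. repeat fix_exp. fixeq. field. lra.
    - intros x _. apply cont_of_der. auto_derive. auto. }
  apply is_RInt_uniqueR in H1. rewrite H1. cbv beta. rewrite Ig0.
  unfold minus, plus, opp; simpl. replace (0*(0*1)/(2*b)) with 0 by (fixeq; field; lra).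
  rewrite exp_0. fixeq. ring.
Qed.

Lemma dawson_bound b y : 0 < b -> 0 <= y ->
  RInt (fun s => exp ((s^2 - y^2)/(2*b))) 0 y <= sqrt (2*b).
Proof.
  intros Hb Hy.
  assert (Hs : 0 < sqrt (2*b)) by (apply sqrt_lt_R0; lra).
  assert (Hs2 : sqrt (2*b) * sqrt (2*b) = 2*b) by (apply sqrt_sqrt; lra).
  assert (Hi : 0 < / (2*b)) by (apply Rinv_0_lt_compat; lra).
  destruct (Rle_lt_dec y (sqrt (2*b))) as [Hle|Hlt].
  - apply Rle_trans with (RInt (fun _ => 1) 0 y).
    + apply RInt_le; auto. apply exRc; intros; auto_derive; auto. apply exRc; intros; auto_derive; auto.
      intros s Hs'. rewrite <- exp_0. apply exp_le. unfold Rdiv. assert (s^2 - y^2 <= 0) by nra. nra.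
    + rewrite RInt_constR. change ((y - 0) * 1 <= sqrt (2*b)). lra.
  - assert (Hy0 : 0 < y) by lra.
    apply Rle_trans with (RInt (fun s => exp (y*(s-y)/(2*b))) 0 y).
    + apply RInt_le; auto. apply exRc; intros; auto_derive; auto. apply exRc; intros; auto_derive; auto.
      intros s Hs'. apply exp_le. unfold Rdiv. apply Rmult_le_compat_r; nra.
    + assert (H1 : is_RInt (fun s => exp (y*(s-y)/(2*b))) 0 y
          (minus ((fun s => (2*b/y) * exp (y*(s-y)/(2*b))) y) ((fun s => (2*b/y) * exp (y*(s-y)/(2*b))) 0))).
      { apply (@is_RInt_derive R_CompleteNormedModule (fun s => (2*b/y) * exp (y*(s-y)/(2*b)))).
        - intros x _. auto_derive; auto. repeat fix_exp. fixeq. field. lra.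
        - intros x _. apply cont_of_der. auto_derive. auto. }
      apply is_RInt_uniqueR in H1. rewrite H1. cbv beta. unfold minus, plus, opp; simpl.
      replace (y*(y-y)/(2*b)) with 0 by (fixeq; field; lra). rewrite exp_0.
      assert (0 < exp (y*(0-y)/(2*b))) by apply exp_pos.
      apply Rle_trans with (2*b/y). 
      * assert (0 < 2*b/y) by (apply Rdiv_lt_0_compat; lra). change (2*b/y*1 + - (2*b/y*exp (y*(0-y)/(2*b))) <= 2*b/y).
        nra.
      * apply Rmult_le_reg_r with y; auto. unfold Rdiv. rewrite Rmult_assoc, Rinv_l by lra. nra.
Qed.

Lemma Ig_bound b d y : 0 < b -> 0 <= y ->
  Rabs (Ig b d y - exp (-(y^2)/(2*b)) * gf b d) <= exp (-(b*d^2)/2) / b * sqrt (2*b).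
Proof.
  intros Hb Hy.
  pose proof (Ig_phi b d y Hb) as HP.
  set (E := exp (-(b*d^2)/2)) in *.
  set (R0 := RInt (fun s => (1/b) * E * sin (d*s) * exp (s^2/(2*b))) 0 y) in *.
  assert (Hea : exp (y^2/(2*b)) * exp (-(y^2)/(2*b)) = 1).
  { rewrite <- exp_plus. replace (y^2/(2*b) + -(y^2)/(2*b)) with 0 by (field; lra). apply exp_0. }
  assert (Heq : Ig b d y - exp (-(y^2)/(2*b)) * gf b d = exp (-(y^2)/(2*b)) * R0).
  { rewrite <- HP. transitivity (Ig b d y * (exp (y^2/(2*b)) * exp (-(y^2)/(2*b))) - exp (-(y^2)/(2*b)) * gf b d).
    rewrite Hea; ring. ring. }
  rewrite Heq, Rabs_mult, Rabs_right by (apply Rle_ge, Rlt_le, exp_pos).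
  assert (HE : 0 < E) by apply exp_pos.
  apply Rle_trans with (exp (-(y^2)/(2*b)) * RInt (fun s => (E/b) * exp (s^2/(2*b))) 0 y).
  - apply Rmult_le_compat_l. apply Rlt_le, exp_pos.
    unfold R0. eapply Rle_trans. apply abs_RInt_le; auto. apply exRc; intros; auto_derive; auto.
    apply RInt_le; auto. apply exRc_abs; intros; auto_derive; auto. apply exRc; intros; auto_derive; auto.
    intros s _. rewrite Rabs_mult, Rabs_mult, Rabs_mult.
    rewrite (Rabs_right (exp _)) by (apply Rle_ge, Rlt_le, exp_pos).
    rewrite (Rabs_right E) by lra. rewrite Rabs_right by (apply Rle_ge, Rlt_le, Rdiv_lt_0_compat; lra).
    assert (Hsin : Rabs (sin (d*s)) <= 1) by (apply Rabs_le; apply SIN_bound). 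
    assert (0 < exp (s^2/(2*b))) by apply exp_pos.
    unfold Rdiv. rewrite Rmult_1_l.
    assert (0 < / b) by (apply Rinv_0_lt_compat; lra).
    assert (0 <= /b * E) by nra. rewrite (Rmult_comm E (/b)). apply Rmult_le_compat_r; [apply Rlt_le, exp_pos|]. rewrite <- (Rmult_1_r (/b*E)) at 2. apply Rmult_le_compat_l; lra.
  - rewrite <- (RInt_scal (V := R_CompleteNormedModule)).
    2:{ apply exRc; intros; auto_derive; auto. }
    rewrite (RInt_ext _ (fun s => scal (E/b) (exp ((s^2 - y^2)/(2*b))))).
    2:{ intros s _. change (scal ?u ?v) with (u*v). rewrite <- Rmult_assoc, (Rmult_comm _ (E/b)), Rmult_assoc, <- exp_plus.
        repeat fix_exp. reflexivity. }
    rewrite (RInt_scal (V := R_CompleteNormedModule)).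
    2:{ apply exRc; intros; auto_derive; auto. }
    change (scal ?u ?v) with (u*v).
    apply Rmult_le_compat_l. apply Rlt_le, Rdiv_lt_0_compat; lra.
    apply dawson_bound; auto.
Qed.


Lemma sum_nR (a : nat -> R) N : sum_n a (S N) = sum_n a N + a (S N).
Proof. rewrite sum_Sn. reflexivity. Qed.

Lemma sum_n_lin (a b : nat -> R) (p q : R) N :
  sum_n (fun k => p * a k + q * b k) N = p * sum_n a N + q * sum_n b N.
Proof.
  induction N.
  - rewrite !sum_O. reflexivity.
  - rewrite !sum_nR, IHN. fixeq; ring.
Qed.

Lemma tail_bound (w u : nat -> R) N : ex_series w -> (forall k, Rabs (u k) <= w k) ->
  Rabs (Series u - sum_n u N) <= Series w - sum_n w N.
Proof.
  intros Hw Hu.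
  assert (Hu' : ex_series u) by (apply (ex_series_le (V := R_CompleteNormedModule) u w); auto).
  assert (Hua : ex_series (fun k => Rabs (u k))).
  { apply (ex_series_le (V := R_CompleteNormedModule) _ w); auto. intros k. unfold norm; simpl. unfold abs; simpl. rewrite Rabs_Rabsolu. auto. }
  rewrite (Series_incr_n u (S N)) by (auto; lia).
  rewrite (Series_incr_n w (S N)) by (auto; lia).
  simpl Init.Nat.pred. rewrite <- !sum_n_Reals.
  replace (sum_n u N + Series (fun k => u (S N + k)%nat) - sum_n u N) with (Series (fun k => u (S N + k)%nat)) by ring.
  replace (sum_n w N + Series (fun k => w (S N + k)%nat) - sum_n w N) with (Series (fun k => w (S N + k)%nat)) by ring.
  eapply Rle_trans. apply Series_Rabs.
  - apply (ex_series_incr_n (fun k => Rabs (u k)) (S N)). auto.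
  - apply Series_le. intros k. split. apply Rabs_pos. apply Hu.
    apply (ex_series_incr_n w (S N)). auto.
Qed.

Lemma tail_nonneg (w : nat -> R) N : ex_series w -> (forall k, 0 <= w k) -> 0 <= Series w - sum_n w N.
Proof.
  intros Hw Hp. eapply Rle_trans. apply Rabs_pos.
  apply (tail_bound w w N Hw). intros k. specialize (Hp k). rewrite Rabs_right; lra.
Qed.

Lemma tail_small (w : nat -> R) : ex_series w -> forall eta, 0 < eta -> forall n, exists N, (n <= N)%nat /\ Series w - sum_n w N < eta.
Proof.
  intros Hw eta He n.
  pose proof (Series_correct _ Hw) as H. apply is_series_Reals in H.
  destruct (H eta He) as [N0 HN0].
  exists (max n N0). split. lia.
  specialize (HN0 (max n N0) ltac:(lia)). unfold R_dist in HN0. rewrite <- sum_n_Reals in HN0.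
  apply Rabs_lt_between in HN0. lra.
Qed.

Lemma le_eps (x y : R) : (forall eta, 0 < eta -> x <= y + eta) -> x <= y.
Proof.
  intros H. destruct (Rle_lt_dec x y); auto.
  specialize (H ((x - y)/2) ltac:(lra)). lra.
Qed.

Lemma approx_rot (w : nat -> R) th psi N : ex_series w -> (forall k, 0 <= w k) ->
  Rabs (Series (fun k => w k * cos (INR k * th)) * cos psi + Series (fun k => w k * sin (INR k * th)) * sin psi
        - sum_n (fun k => w k * cos (INR k * th - psi)) N) <= 2 * (Series w - sum_n w N).
Proof.
  intros Hw Hp.
  rewrite (sum_n_ext _ (fun k => cos psi * (w k * cos (INR k * th)) + sin psi * (w k * sin (INR k * th)))).
  2:{ intros k. rewrite cos_minus. fixeq; ring. }
  rewrite sum_n_lin.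
  pose proof (tail_bound w (fun k => w k * cos (INR k * th)) N Hw) as T1.
  pose proof (tail_bound w (fun k => w k * sin (INR k * th)) N Hw) as T2.
  assert (B1 : forall k, Rabs (w k * cos (INR k * th)) <= w k).
  { intros k. rewrite Rabs_mult, Rabs_right by (apply Rle_ge; auto).
    assert (Rabs (cos (INR k * th)) <= 1) by (apply Rabs_le; apply COS_bound).
    specialize (Hp k). nra. }
  assert (B2 : forall k, Rabs (w k * sin (INR k * th)) <= w k).
  { intros k. rewrite Rabs_mult, Rabs_right by (apply Rle_ge; auto).
    assert (Rabs (sin (INR k * th)) <= 1) by (apply Rabs_le; apply SIN_bound).
    specialize (Hp k). nra. }
  specialize (T1 B1). specialize (T2 B2).
  set (S1 := Series (fun k => w k * cos (INR k * th))) in *.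
  set (S2 := Series (fun k => w k * sin (INR k * th))) in *.
  set (P1 := sum_n (fun k => w k * cos (INR k * th)) N) in *.
  set (P2 := sum_n (fun k => w k * sin (INR k * th)) N) in *.
  replace (S1 * cos psi + S2 * sin psi - (cos psi * P1 + sin psi * P2))
    with (cos psi * (S1 - P1) + sin psi * (S2 - P2)) by ring.
  eapply Rle_trans. apply Rabs_triang. rewrite !Rabs_mult.
  assert (Rabs (cos psi) <= 1) by (apply Rabs_le; apply COS_bound).
  assert (Rabs (sin psi) <= 1) by (apply Rabs_le; apply SIN_bound).
  assert (0 <= Rabs (S1 - P1)) by apply Rabs_pos.
  assert (0 <= Rabs (S2 - P2)) by apply Rabs_pos.
  nra.
Qed.

Lemma RInt_sum_n (g : nat -> R -> R) a b N : (forall k, ex_RInt (g k) a b) ->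
  ex_RInt (fun x => sum_n (fun k => g k x) N) a b /\
  RInt (fun x => sum_n (fun k => g k x) N) a b = sum_n (fun k => RInt (g k) a b) N.
Proof.
  intros Hg. induction N.
  - split.
    + eapply ex_RInt_ext; [|apply (Hg 0%nat)]. intros x _. rewrite sum_O. reflexivity.
    + rewrite sum_O. apply RInt_ext. intros x _. rewrite sum_O. reflexivity.
  - destruct IHN as [IH1 IH2]. split.
    + eapply ex_RInt_ext; [|apply (ex_RInt_plus _ _ a b IH1 (Hg (S N)))].
      intros x _. rewrite sum_nR. reflexivity.
    + rewrite sum_nR. rewrite (RInt_ext _ (fun x => plus (sum_n (fun k => g k x) N) (g (S N) x))).
      2:{ intros x _. rewrite sum_nR. reflexivity. }
      rewrite (RInt_plus (V := R_CompleteNormedModule)); auto. rewrite IH2. reflexivity.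
Qed.

Lemma sin_int_pi (m : Z) : sin (IZR m * PI) = 0.
Proof. apply sin_eq_0_1. exists m. reflexivity. Qed.

Lemma J_val n k : RInt (fun th => cos (INR k * th - INR n * th)) 0 PI = if Nat.eq_dec k n then PI else 0.
Proof.
  destruct (Nat.eq_dec k n) as [->|Hne].
  - rewrite (RInt_ext _ (fun _ => 1)).
    + rewrite RInt_constR. fixeq; ring.
    + intros x _. replace (INR n * x - INR n * x) with 0 by ring. apply cos_0.
  - set (m := INR k - INR n).
    assert (Hm : m <> 0) by (unfold m; intros H; apply (not_INR k n Hne); lra).
    assert (H : is_RInt (fun th => cos (INR k * th - INR n * th)) 0 PI
                 (minus ((fun th => sin (m * th) / m) PI) ((fun th => sin (m * th) / m) 0))).
    { apply (@is_RInt_derive R_CompleteNormedModule (fun th => sin (m * th) / m)).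
      - intros x _. auto_derive; auto. unfold m. fixeq. replace ((INR k - INR n) * x) with (INR k * x - INR n * x) by ring. field. fold m. auto.
      - intros x _. apply cont_of_der. auto_derive. auto. }
    apply is_RInt_uniqueR in H. rewrite H. cbv beta.
    unfold minus, plus, opp; simpl.
    assert (E : m = IZR (Z.of_nat k - Z.of_nat n)) by (unfold m; rewrite minus_IZR, <- !INR_IZR_INZ; reflexivity).
    rewrite E at 1. rewrite sin_int_pi. rewrite Rmult_0_r, sin_0. fixeq. field. auto.
Qed.

Lemma sum_delta (w : nat -> R) n N : (n <= N)%nat ->
  sum_n (fun k => w k * (if Nat.eq_dec k n then PI else 0)) N = PI * w n.
Proof.
  induction N; intros HN.
  - assert (n = 0%nat) by lia. subst. rewrite sum_O. destruct (Nat.eq_dec 0 0); [|lia]. fixeq; ring.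
  - destruct (Nat.eq_dec (S N) n) as [E|E].
    + subst n. rewrite sum_nR. destruct (Nat.eq_dec (S N) (S N)); [|lia].
      rewrite (sum_n_ext_loc _ (fun _ => 0)).
      * rewrite sum_n_const. fixeq; ring.
      * intros k Hk. destruct (Nat.eq_dec k (S N)); [lia|]. fixeq; ring.
    + rewrite sum_nR, IHN by lia. destruct (Nat.eq_dec (S N) n); [lia|]. fixeq; ring.
Qed.

Definition SN (w : nat -> R) n N th := sum_n (fun k => w k * cos (INR k * th - INR n * th)) N.

Lemma SN_ex (w : nat -> R) n N a b : ex_RInt (SN w n N) a b.
Proof.
  apply (RInt_sum_n (fun k th => w k * cos (INR k * th - INR n * th)) a b N).
  intros k. apply exRc. intros; auto_derive; auto.
Qed.

Lemma fourier (w : nat -> R) n N : (n <= N)%nat -> RInt (SN w n N) 0 PI = PI * w n.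
Proof.
  intros HN. unfold SN.
  destruct (RInt_sum_n (fun k th => w k * cos (INR k * th - INR n * th)) 0 PI N) as [_ E].
  { intros k. apply exRc. intros; auto_derive; auto. }
  rewrite E. rewrite <- (sum_delta w n N HN). apply sum_n_ext. intros k.
  rewrite <- J_val. rewrite <- (RInt_scal (V := R_CompleteNormedModule)).
  - reflexivity.
  - apply exRc. intros; auto_derive; auto.
Qed.


Lemma sum_n_mono (a b : nat -> R) N : (forall k, a k <= b k) -> sum_n a N <= sum_n b N.
Proof.
  intros H. induction N.
  - rewrite !sum_O. apply H.
  - rewrite !sum_nR. specialize (H (S N)). lra.
Qed.

Lemma cos_lip a b : Rabs (cos a - cos b) <= Rabs (a - b).
Proof.
  destruct (MVT_abs cos (fun x => - sin x) b a) as [c [Hc _]].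
  { intros c _. apply derivable_pt_lim_cos. }
  rewrite Hc. rewrite Rabs_Ropp.
  assert (Rabs (sin c) <= 1) by (apply Rabs_le; apply SIN_bound).
  pose proof (Rabs_pos (a - b)). nra.
Qed.

Lemma exp_lip a b : a <= 0 -> b <= 0 -> Rabs (exp a - exp b) <= Rabs (a - b).
Proof.
  intros Ha Hb.
  destruct (MVT_abs exp exp b a) as [c [Hc Hcr]].
  { intros c _. apply derivable_pt_lim_exp. }
  rewrite Hc. rewrite Rabs_right by (apply Rle_ge, Rlt_le, exp_pos).
  assert (c <= 0). { destruct Hcr as [_ Hcr]. eapply Rle_trans; [exact Hcr|]. apply Rmax_lub; auto. }
  assert (exp c <= 1) by (rewrite <- exp_0; apply exp_le; auto).
  pose proof (Rabs_pos (a - b)). pose proof (exp_pos c). nra.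
Qed.

Section Core.
Variable w : nat -> R.
Hypothesis Hw : ex_series w.
Hypothesis Hp : forall k, 0 <= w k.
Let H := Series w.
Hypothesis Hpos : 0 < H.
Let ReH th := Series (fun k => w k * cos (INR k * th)).
Let ImH th := Series (fun k => w k * sin (INR k * th)).

Lemma rot_le th psi : ReH th * cos psi + ImH th * sin psi <= H.
Proof.
  apply le_eps. intros eta He.
  destruct (tail_small w Hw (eta/2) ltac:(lra) 0) as [N [_ HN]].
  pose proof (approx_rot w th psi N Hw Hp) as Ha.
  apply Rabs_le_between in Ha.
  assert (sum_n (fun k => w k * cos (INR k * th - psi)) N <= sum_n w N).
  { apply sum_n_mono. intros k. specialize (Hp k).
    assert (cos (INR k * th - psi) <= 1) by apply COS_bound. nra. }
  unfold ReH, ImH, H in *. lra.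
Qed.

Lemma er_le1 th r phi : ReH th = H * (exp r * cos phi) -> ImH th = H * (exp r * sin phi) -> r <= 0.
Proof.
  intros E1 E2. pose proof (rot_le th phi) as R1. rewrite E1, E2 in R1.
  replace (H * (exp r * cos phi) * cos phi + H * (exp r * sin phi) * sin phi) with (H * exp r * (Rsqr (sin phi) + Rsqr (cos phi))) in R1 by (unfold Rsqr; ring).
  rewrite sin2_cos2 in R1.
  destruct (Rle_lt_dec r 0); auto. exfalso.
  pose proof (exp_increasing 0 r r0). rewrite exp_0 in H0. nra.
Qed.

Lemma inner_pt th r phi b A D (n : nat) : 0 < b ->
  ReH th = H * (exp r * cos phi) -> ImH th = H * (exp r * sin phi) ->
  Rabs (r - (-(b*th^2)/2)) <= D -> Rabs (phi - th*A) <= D ->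
  Rabs (ReH th * cos (INR n * th) + ImH th * sin (INR n * th)
        - H * (exp (-(b*th^2)/2) * cos (th * (A - INR n)))) <= 2 * H * D.
Proof.
  intros Hb E1 E2 Dr Dp.
  pose proof (er_le1 th r phi E1 E2) as Hr.
  rewrite E1, E2.
  replace (H * (exp r * cos phi) * cos (INR n * th) + H * (exp r * sin phi) * sin (INR n * th))
    with (H * (exp r * cos (phi - INR n * th))) by (rewrite cos_minus; ring).
  replace (H * (exp r * cos (phi - INR n * th)) - H * (exp (-(b*th^2)/2) * cos (th * (A - INR n))))
    with (H * (exp r * (cos (phi - INR n * th) - cos (th * (A - INR n))) + (exp r - exp (-(b*th^2)/2)) * cos (th * (A - INR n)))) by ring.
  rewrite Rabs_mult, (Rabs_right H) by lra.
  assert (Hg : -(b*th^2)/2 <= 0) by (assert (0 <= b*th^2) by (apply Rmult_le_pos; nra); lra).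
  pose proof (exp_lip r (-(b*th^2)/2) Hr Hg) as L1.
  pose proof (cos_lip (phi - INR n * th) (th * (A - INR n))) as L2.
  replace (phi - INR n * th - th * (A - INR n)) with (phi - th * A) in L2 by ring.
  assert (Hc : Rabs (cos (th * (A - INR n))) <= 1) by (apply Rabs_le; apply COS_bound).
  assert (He : exp r <= 1) by (rewrite <- exp_0; apply exp_le; auto).
  pose proof (exp_pos r).
  assert (Rabs (exp r * (cos (phi - INR n * th) - cos (th * (A - INR n))) + (exp r - exp (-(b*th^2)/2)) * cos (th * (A - INR n))) <= 2 * D).
  { eapply Rle_trans. apply Rabs_triang. rewrite !Rabs_mult. rewrite (Rabs_right (exp r)) by lra.
    pose proof (Rabs_pos (cos (phi - INR n * th) - cos (th * (A - INR n)))).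
    pose proof (Rabs_pos (exp r - exp (-(b*th^2)/2))). nra. }
  nra.
Qed.

Lemma core n b delta A D Q : 0 < b -> 0 <= delta <= PI -> 0 <= D ->
  (forall th, 0 <= th <= delta -> exists r phi, ReH th = H * (exp r * cos phi) /\ ImH th = H * (exp r * sin phi)
      /\ Rabs (r - (-(b*th^2)/2)) <= D /\ Rabs (phi - th*A) <= D) ->
  (forall th, delta <= th <= PI -> Rabs (ReH th * cos (INR n * th) + ImH th * sin (INR n * th)) <= Q) ->
  Rabs (PI * w n - H * Ig b delta (A - INR n)) <= delta * (2 * H * D) + PI * Q.
Proof.
  intros Hb Hd HD H3 H4.
  apply le_eps. intros eta He.
  destruct (tail_small w Hw (eta/(2*PI)) ltac:(apply Rdiv_lt_0_compat; [lra| pose proof PI_RGT_0; lra]) n) as [N [HnN HN]].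
  set (tau := Series w - sum_n w N) in *.
  assert (Htau : 0 <= tau) by (apply tail_nonneg; auto).
  assert (Happ : forall th, Rabs (ReH th * cos (INR n * th) + ImH th * sin (INR n * th) - SN w n N th) <= 2 * tau).
  { intros th. apply approx_rot; auto. }
  set (g := fun th => H * (exp (-(b*th^2)/2) * cos (th * (A - INR n)))).
  assert (Ex1 : ex_RInt g 0 delta) by (apply exRc; intros; unfold g; auto_derive; auto).
  assert (Eg : H * Ig b delta (A - INR n) = RInt g 0 delta).
  { unfold Ig, g. rewrite <- (RInt_scal (V := R_CompleteNormedModule)) by (apply exRc; intros; auto_derive; auto).
    reflexivity. }
  assert (Ef : PI * w n = RInt (SN w n N) 0 delta + RInt (SN w n N) delta PI).
  { rewrite <- (fourier w n N HnN).
    rewrite <- (RInt_Chasles (V := R_CompleteNormedModule) (SN w n N) 0 delta PI) by apply SN_ex.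
    reflexivity. }
  rewrite Eg, Ef.
  replace (RInt (SN w n N) 0 delta + RInt (SN w n N) delta PI - RInt g 0 delta)
    with ((RInt (SN w n N) 0 delta - RInt g 0 delta) + RInt (SN w n N) delta PI) by ring.
  assert (I1 : Rabs (RInt (SN w n N) 0 delta - RInt g 0 delta) <= (delta - 0) * (2 * tau + 2 * H * D)).
  { rewrite <- (RInt_minus (V := R_CompleteNormedModule)) by (auto; apply SN_ex).
    apply abs_RInt_le_const. lra.
    apply (ex_RInt_minus (V := R_CompleteNormedModule)); auto; apply SN_ex.
    intros th Hth. destruct (H3 th Hth) as [r [phi [E1 [E2 [D1 D2]]]]].
    pose proof (inner_pt th r phi b A D n Hb E1 E2 D1 D2) as P.
    specialize (Happ th).
    unfold g. change (minus ?u ?v) with (u - v).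
    replace (SN w n N th - H * (exp (-(b*th^2)/2) * cos (th * (A - INR n))))
      with (- (ReH th * cos (INR n * th) + ImH th * sin (INR n * th) - SN w n N th)
            + (ReH th * cos (INR n * th) + ImH th * sin (INR n * th) - H * (exp (-(b*th^2)/2) * cos (th * (A - INR n))))) by ring.
    eapply Rle_trans. apply Rabs_triang. rewrite Rabs_Ropp. lra. }
  assert (I2 : Rabs (RInt (SN w n N) delta PI) <= (PI - delta) * (2 * tau + Q)).
  { apply abs_RInt_le_const. lra. apply SN_ex.
    intros th Hth. specialize (Happ th). specialize (H4 th Hth).
    replace (SN w n N th) with (- (ReH th * cos (INR n * th) + ImH th * sin (INR n * th) - SN w n N th)
                               + (ReH th * cos (INR n * th) + ImH th * sin (INR n * th))) by ring.
    eapply Rle_trans. apply Rabs_triang. rewrite Rabs_Ropp. lra. }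
  eapply Rle_trans. apply Rabs_triang.
  assert (Hq : 0 <= Q).
  { specialize (H4 PI ltac:(lra)). eapply Rle_trans; [apply Rabs_pos|exact H4]. }
  assert (tau * (2 * PI) < eta).
  { pose proof PI_RGT_0. apply (Rmult_lt_compat_r (2*PI)) in HN; [|lra].
    unfold Rdiv in HN. rewrite Rmult_assoc, Rinv_l in HN by lra. lra. }
  assert (0 <= delta * tau) by nra.
  assert (0 <= (PI - delta) * tau) by nra.
  assert (0 <= H * D) by nra.
  assert (delta * (H*D) <= delta * (H * D)) by lra.
  assert ((PI - delta) * Q <= PI * Q) by nra.
  lra.
Qed.
End Core.


Lemma exp_pow_INR t k : exp t ^ k = exp (INR k * t).
Proof.
  induction k.
  - simpl. rewrite Rmult_0_l, exp_0. reflexivity.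
  - rewrite S_INR. simpl. rewrite IHk, <- exp_plus. f_equal. ring.
Qed.

Lemma Cdiv_R (x y h u v : R) : h <> 0 -> Cdiv (x, y) (RtoC h) = (u, v) -> x = h * u /\ y = h * v.
Proof.
  intros Hh E. unfold Cdiv, Cmult, Cinv, RtoC in E. simpl in E.
  injection E as E1 E2. split.
  - rewrite <- E1. field. auto.
  - rewrite <- E2. field. auto.
Qed.

Lemma rot_Cmod x y psi : Rabs (x * cos psi + y * sin psi) <= Cmod (x, y).
Proof.
  unfold Cmod. simpl.
  rewrite <- sqrt_Rsqr_abs. apply sqrt_le_1_alt.
  pose proof (sin2_cos2 psi). unfold Rsqr in *.
  assert (0 <= (x * sin psi - y * cos psi)^2) by apply pow2_ge_0.
  nra.
Qed.

Lemma im_le_Cmod (z : C) : Rabs (snd z) <= Cmod z.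
Proof. eapply Rle_trans; [|apply Rmax_Cmod]. apply Rmax_r. Qed.

Lemma re_le_Cmod' (z : C) : Rabs (fst z) <= Cmod z.
Proof. eapply Rle_trans; [|apply Rmax_Cmod]. apply Rmax_l. Qed.

Lemma Ig_even b d y : Ig b d (- y) = Ig b d y.
Proof. unfold Ig. apply RInt_ext. intros x _. f_equal. rewrite <- cos_neg. f_equal. ring. Qed.

Lemma Ig_abs b d y : Ig b d y = Ig b d (Rabs y).
Proof. unfold Rabs. destruct (Rcase_abs y). rewrite Ig_even. reflexivity. reflexivity. Qed.

Lemma ln_le_Rpower b e : 1 <= b -> 0 < e -> ln b <= (1/e) * Rpower b e.
Proof.
  intros Hb He. unfold Rpower.
  pose proof (exp_ineq1_le (e * ln b)).
  apply Rmult_le_reg_l with e; auto. field_simplify; try lra.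
Qed.

Lemma sum_n_ge_term (w : nat -> R) k : (forall j, 0 <= w j) -> w k <= sum_n w k.
Proof.
  intros Hp. destruct k.
  - rewrite sum_O. lra.
  - rewrite sum_nR. assert (0 <= sum_n w k).
    { clear - Hp. induction k. rewrite sum_O. apply Hp. rewrite sum_nR. specialize (Hp (S k)). lra. }
    lra.
Qed.

Lemma final_arith (b CG e0 K H wn y Igv gfv dl D : R) :
  1 < b -> 2 < CG -> 0 < e0 -> 0 < H -> 0 <= dl ->
  dl^2 = CG * ln b / b ->
  D = Rpower b (3/2 - e0) * dl^3 ->
  Rabs (PI*wn - H*Igv) <= dl*(2*H*D) + PI*(Rabs K*(H/b)) ->
  Rabs (Igv - exp (-(y^2)/(2*b)) * gfv) <= exp (-(b*dl^2)/2) / b * sqrt (2*b) ->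
  Rabs (gfv - sqrt (PI/(2*b))) <= (2/b) * exp (-(b*dl^2)/2) / sqrt (PI/(2*b)) ->
  Rabs (wn * sqrt (2*PI*b) / H - exp (-(y^2)/(2*b)))
    <= (32*CG^2/e0^2 + 4*Rabs K + 4) / Rpower b (Rmin (e0/2) (1/2)).
Proof.
  intros Hb HCG He0 HH Hdl Hdl2 HD B1 B2 B3.
  set (e' := Rmin (e0/2) (1/2)).
  assert (He' : 0 < e' <= 1/2 /\ e' <= e0/2) by (unfold e', Rmin; destruct (Rle_dec (e0/2) (1/2)); lra).
  pose proof PI_RGT_0 as HPI. pose proof PI2_1 as HPI2.
  set (r := sqrt b). assert (Hr : 0 < r) by (apply sqrt_lt_R0; lra).
  assert (Hr2 : r * r = b) by (apply sqrt_sqrt; lra).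
  set (p := sqrt (PI/2)). assert (Hp0 : 0 <= p) by apply sqrt_pos.
  assert (Hp2 : p * p = PI/2) by (apply sqrt_sqrt; lra).
  assert (Hp1 : 1 <= p) by nra.
  set (s := sqrt (PI/(2*b))).
  assert (Hs0 : 0 < s) by (apply sqrt_lt_R0; apply Rdiv_lt_0_compat; lra).
  assert (Hsr : s * r = p).
  { unfold s, r, p. rewrite <- sqrt_mult by (try apply Rlt_le, Rdiv_lt_0_compat; lra). f_equal. field. lra. }
  assert (Hsq : sqrt (2*PI*b) = 2 * p * r).
  { unfold p, r. replace (2*PI*b) with ((2*2) * (PI/2 * b)) by field.
    rewrite sqrt_mult by (try apply Rmult_le_pos; lra). rewrite sqrt_square by lra. rewrite sqrt_mult by lra. ring. }
  assert (Hs2b : sqrt (2*b) <= 3/2 * r).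
  { unfold r. rewrite sqrt_mult by lra. apply Rmult_le_compat_r. apply sqrt_pos.
    rewrite <- (sqrt_square (3/2)) by lra. apply sqrt_le_1_alt. lra. }
  set (E := exp (-(b*dl^2)/2)) in *.
  set (G := exp (-(y^2)/(2*b))) in *.
  assert (HE0 : 0 < E) by apply exp_pos.
  assert (HG : 0 < G <= 1) by (split; [apply exp_pos| rewrite <- exp_0; apply exp_le;
     assert (0 <= y^2) by apply pow2_ge_0; unfold Rdiv; assert (0 < /(2*b)) by (apply Rinv_0_lt_compat; lra); nra]).
  assert (Hlnb : 0 < ln b) by (rewrite <- ln_1; apply ln_increasing; lra).
  set (P := fun x => Rpower b x).
  assert (Pmono : forall x z, x <= z -> P x <= P z) by (intros; apply Rle_Rpower; lra).
  assert (Ppos : forall x, 0 < P x) by (intros; apply exp_pos).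
  assert (Pplus : forall x z, P (x + z) = P x * P z) by (intros; apply Rpower_plus).
  assert (P1 : P 1 = b) by (apply Rpower_1; lra).
  assert (Ph : P (/2) = r) by (apply Rpower_sqrt; lra).
  assert (Pm1 : P (Ropp 1) = /b) by (unfold P; rewrite Rpower_Ropp; f_equal; auto).
  assert (Pmh : P (-/2) = /r) by (unfold P; rewrite Rpower_Ropp; f_equal; auto).
  assert (HE : E <= /b).
  { assert (Ee : exp (- ln b) = /b) by (rewrite exp_Ropp, exp_ln; lra).
    rewrite <- Ee. unfold E. apply exp_le.
    assert (Hbd : b*dl^2 = CG*ln b) by (rewrite Hdl2; field; lra).
    rewrite Hbd. nra. }
  assert (HEP : E <= P (-e')) by (eapply Rle_trans; [exact HE| rewrite <- Pm1; apply Pmono; lra]).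
  assert (HrP : /r <= P (-e')) by (rewrite <- Pmh; apply Pmono; lra).
  set (U1 := (PI*wn - H*Igv)/H). set (U2 := Igv - G*gfv). set (U3 := G*(gfv - s)).
  assert (HT : wn * sqrt (2*PI*b) / H - G = (r/p) * (U1 + U2 + U3)).
  { rewrite Hsq. unfold U1, U2, U3. replace PI with (2*(p*p)) by lra.
    apply (Rmult_eq_reg_r p); [|lra]. field_simplify; try lra.
    rewrite <- Hsr. field. lra. }
  rewrite HT, Rabs_mult, Rabs_right by (apply Rle_ge, Rlt_le, Rdiv_lt_0_compat; lra).
  assert (HU1 : Rabs U1 <= dl*(2*D) + PI*(Rabs K/b)).
  { unfold U1. rewrite Rabs_div by lra. rewrite (Rabs_right H) by lra.
    apply (Rmult_le_reg_r H); [lra|]. unfold Rdiv at 1. rewrite Rmult_assoc, Rinv_l, Rmult_1_r by lra.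
    eapply Rle_trans; [exact B1|]. right. field. lra. }
  assert (HU3 : Rabs U3 <= 2 * E * r / b).
  { unfold U3. rewrite Rabs_mult, (Rabs_right G) by lra.
    assert (B3' : Rabs (gfv - s) <= 2 * E * r / b).
    { eapply Rle_trans; [exact B3|]. fold s.
      replace (2/b*E/s) with (2*E/b * (/s)) by (field; lra).
      replace (2*E*r/b) with (2*E/b * r) by (field; lra).
      apply Rmult_le_compat_l. apply Rlt_le, Rdiv_lt_0_compat; lra.
      replace (/s) with (r / p) by (apply (Rmult_eq_reg_r s); [|lra]; field_simplify; try lra; rewrite (Rmult_comm r s), Hsr; field; lra).
      unfold Rdiv. rewrite <- (Rmult_1_r r) at 2. apply Rmult_le_compat_l; [lra|].
      rewrite <- Rinv_1. apply Rinv_le_contravar; lra. }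
    pose proof (Rabs_pos (gfv - s)). nra. }
  assert (HU2 : Rabs U2 <= E / b * (3/2*r)).
  { eapply Rle_trans; [exact B2|]. apply Rmult_le_compat_l; [apply Rlt_le, Rdiv_lt_0_compat; lra | auto]. }
  assert (Hrp : r / p <= r).
  { unfold Rdiv. rewrite <- (Rmult_1_r r) at 2. apply Rmult_le_compat_l; [lra|].
    rewrite <- Rinv_1. apply Rinv_le_contravar; lra. }
  assert (Hmain : r * (dl * (2*D)) <= 32*CG^2/e0^2 * P (-e')).
  { rewrite HD.
    assert (Eq1 : Rpower b (3/2 - e0) = b * r * P (-e0)).
    { change (Rpower b (3/2 - e0)) with (P (3/2 - e0)). replace (3/2 - e0) with (1 + (/2 + - e0)) by field.
      rewrite !Pplus, P1, Ph. ring. }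
    rewrite Eq1.
    replace (r * (dl * (2 * (b * r * P (- e0) * dl ^ 3)))) with (2 * (r*r) * b * (dl^2)^2 * P (-e0)) by ring.
    rewrite Hr2, Hdl2.
    replace (2 * b * b * (CG * ln b / b) ^ 2 * P (- e0)) with (2 * CG^2 * (ln b)^2 * P (-e0)) by (field; lra).
    pose proof (ln_le_Rpower b (e0/4) ltac:(lra) ltac:(lra)) as Hl. change (Rpower b (e0/4)) with (P (e0/4)) in Hl.
    assert (Hl2 : (ln b)^2 <= (16/e0^2) * P (e0/2)).
    { replace (e0/2) with (e0/4 + e0/4) by field. rewrite Pplus.
      replace (16/e0^2 * (P (e0/4) * P (e0/4))) with ((1/(e0/4) * P (e0/4))^2) by (field; lra).
      apply pow_incr. lra. }
    assert (Hl3 : P (e0/2) * P (-e0) <= P (-e')).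
    { rewrite <- Pplus. apply Pmono. lra. }
    pose proof (Ppos (-e0)). pose proof (Ppos (e0/2)).
    assert (0 <= CG^2) by apply pow2_ge_0.
    apply Rle_trans with (2 * CG^2 * ((16/e0^2) * P (e0/2)) * P (-e0)).
    - apply Rmult_le_compat_r; [lra|]. apply Rmult_le_compat_l; lra.
    - replace (2 * CG^2 * ((16/e0^2) * P (e0/2)) * P (-e0)) with (32*CG^2/e0^2 * (P (e0/2) * P (-e0))) by (field; lra).
      apply Rmult_le_compat_l; auto. apply Rdiv_le_0_compat; [nra| apply pow_lt; lra]. }
  assert (HK : r * (PI * (Rabs K / b)) <= 4 * Rabs K * P (-e')).
  { replace (r * (PI * (Rabs K / b))) with (PI * Rabs K * / r) by (rewrite <- Hr2; field; lra).
    pose proof (Rabs_pos K). pose proof PI_4.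
    assert (0 < / r) by (apply Rinv_0_lt_compat; lra).
    apply Rle_trans with (4*Rabs K * /r). apply Rmult_le_compat_r; [lra| apply Rmult_le_compat_r; lra]. apply Rmult_le_compat_l; lra. }
  assert (HU2' : r * Rabs U2 <= 2 * P (-e')).
  { apply Rle_trans with (r * (E / b * (3/2*r))). apply Rmult_le_compat_l; lra.
    replace (r * (E / b * (3/2*r))) with (3/2 * E) by (rewrite <- Hr2; field; lra). lra. }
  assert (HU3' : r * Rabs U3 <= 2 * P (-e')).
  { apply Rle_trans with (r * (2 * E * r / b)). apply Rmult_le_compat_l; lra.
    replace (r * (2 * E * r / b)) with (2 * E) by (rewrite <- Hr2; field; lra). lra. }
  assert (Efin : (32*CG^2/e0^2 + 4*Rabs K + 4) / P e' = (32*CG^2/e0^2 + 4*Rabs K + 4) * P (-e')) by (unfold P; rewrite Rpower_Ropp; reflexivity).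
  rewrite Efin.
  apply Rle_trans with (r * (Rabs U1 + Rabs U2 + Rabs U3)).
  - apply Rle_trans with ((r/p) * (Rabs U1 + Rabs U2 + Rabs U3)).
    + apply Rmult_le_compat_l. apply Rlt_le, Rdiv_lt_0_compat; lra.
      eapply Rle_trans. apply Rabs_triang. apply Rplus_le_compat_r. apply Rabs_triang.
    + apply Rmult_le_compat_r; auto. pose proof (Rabs_pos U1). pose proof (Rabs_pos U2). pose proof (Rabs_pos U3). lra.
  - assert (r * Rabs U1 <= r * (dl*(2*D)) + r * (PI*(Rabs K/b))) by (rewrite <- Rmult_plus_distr_l; apply Rmult_le_compat_l; lra).
    pose proof (Ppos (-e')). lra.
Qed.

Theorem lemma6p5 (a : nat -> R) :
  type_II_admissible (fun n => a n ^ 2) ->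
  exists eps C t0, 0 < eps < 1 /\ 0 < C /\
    forall t (n : nat), t0 <= t ->
      Rabs (a n ^ 2 * exp (INR n * t)
              * sqrt (2 * PI * Bf (fun k => a k ^ 2) t) / Hr (fun k => a k ^ 2) t
            - exp (- (INR n - Af (fun k => a k ^ 2) t) ^ 2
                   / (2 * Bf (fun k => a k ^ 2) t)))
        <= C / Rpower (Bf (fun k => a k ^ 2) t) eps.
Proof.
  intros [Hrad [Hnn [Hinf [Hmono [Hunb [_ [CG [e0 [HCG [He0 [[T3 H3] [K [T4 H4]]]]]]]]]]]]].
  set (c := fun k => a k ^ 2) in *.
  destruct (Hunb (1 + 4*CG^2)) as [t1 Ht1].
  exists (Rmin (e0/2) (1/2)), (32*CG^2/e0^2 + 4*Rabs K + 4), (Rmax t1 (Rmax T3 T4)).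
  split. { unfold Rmin; destruct (Rle_dec (e0/2) (1/2)); lra. }
  split. { assert (0 <= 32*CG^2/e0^2) by (apply Rdiv_le_0_compat; [nra|apply pow_lt; lra]).
           pose proof (Rabs_pos K). lra. }
  intros t n Ht.
  assert (Ht1' : t1 <= t) by (eapply Rle_trans; [apply Rmax_l|exact Ht]).
  assert (Ht3 : T3 <= t) by (eapply Rle_trans; [|exact Ht]; eapply Rle_trans; [|apply Rmax_r]; apply Rmax_l).
  assert (Ht4 : T4 <= t) by (eapply Rle_trans; [|exact Ht]; eapply Rle_trans; [|apply Rmax_r]; apply Rmax_r).
  specialize (H3 t). specialize (H4 t).
  set (b := Bf c t) in *.
  assert (Hb : 1 + 4*CG^2 < b) by (pose proof (Hmono t1 t Ht1'); unfold b; lra).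
  set (A := Af c t) in *.
  set (w := fun k => c k * exp (INR k * t)).
  assert (Hp : forall k, 0 <= w k).
  { intros k. unfold w, c. apply Rmult_le_pos. apply pow2_ge_0. apply Rlt_le, exp_pos. }
  assert (Hw : ex_series w).
  { assert (Hx : Rbar_lt (Rabs (exp t)) (CV_radius c)) by (rewrite Hrad; simpl; auto).
    pose proof (CV_radius_inside c (exp t) Hx) as He.
    unfold ex_pseries in He. eapply ex_series_ext; [|exact He].
    intros k. unfold w. rewrite <- exp_pow_INR, <- pow_n_pow. change (scal ?u ?v) with (u * v). apply Rmult_comm. }
  assert (HrS : Hr c t = Series w).
  { unfold Hr, PSeries. apply Series_ext. intros k. unfold w. rewrite exp_pow_INR. reflexivity. }
  set (H := Series w) in *.
  assert (Hpos : 0 < H).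
  { destruct (Hinf 0%nat) as [k [_ Hk]].
    assert (Hwk : 0 < w k).
    { unfold w. apply Rmult_lt_0_compat; [|apply exp_pos]. destruct (Rle_lt_or_eq_dec _ _ (Hnn k)) as [Hl|Hl]; [exact Hl| exfalso; apply Hk; symmetry; exact Hl]. }
    pose proof (tail_nonneg w k Hw Hp). pose proof (sum_n_ge_term w k Hp). unfold H. lra. }
  rewrite HrS.
  assert (Hlnb : 0 < ln b) by (rewrite <- ln_1; apply ln_increasing; nra).
  set (dl := deltaf c CG t) in *.
  assert (Hdl0 : 0 <= dl) by apply sqrt_pos.
  assert (Hdl2 : dl^2 = CG * ln b / b).
  { unfold dl, deltaf. fold b. rewrite <- Rsqr_pow2. apply Rsqr_sqrt.
    assert (0 <= CG^2) by apply pow2_ge_0. apply Rlt_le, Rdiv_lt_0_compat; [apply Rmult_lt_0_compat; lra | lra]. }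
  assert (Hdl1 : dl <= 1).
  { assert (Hl : ln b <= 2 * sqrt b).
    { pose proof (ln_le_Rpower b (/2) ltac:(nra) ltac:(lra)) as Hl. rewrite Rpower_sqrt in Hl by nra. lra. }
    assert (Hsb : 2 * CG <= sqrt b).
    { rewrite <- (sqrt_square (2*CG)) by lra. apply sqrt_le_1_alt. nra. }
    assert (CG * ln b <= b).
    { assert (0 <= sqrt b) by apply sqrt_pos. assert (sqrt b * sqrt b = b) by (apply sqrt_sqrt; nra). nra. }
    assert (dl^2 <= 1) by (rewrite Hdl2; apply (Rmult_le_reg_r b); [nra|]; field_simplify; nra).
    nra. }
  pose proof PI2_1 as HPI.
  set (D := Rpower b (3/2 - e0) * dl^3).
  assert (HD0 : 0 <= D) by (apply Rmult_le_pos; [apply Rlt_le, exp_pos| apply pow_le; auto]).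
  pose proof (core w Hw Hp Hpos n b dl A D (Rabs K * (H/b)) ltac:(nra) ltac:(lra) HD0) as Hcore.
  assert (Hcore' : Rabs (PI * w n - H * Ig b dl (A - INR n)) <= dl * (2 * H * D) + PI * (Rabs K * (H/b))).
  { apply Hcore.
    - intros th Hth.
      destruct (H3 th Ht3 ltac:(rewrite Rabs_right by lra; lra)) as [Dl [Eq Bd]].
      change (Hc c t th) with (Series (fun k => w k * cos (INR k * th)), Series (fun k => w k * sin (INR k * th))) in Eq.
      rewrite HrS in Eq. fold H in Eq.
      unfold cexp, Cplus in Eq. simpl in Eq.
      apply Cdiv_R in Eq; [|lra]. destruct Eq as [E1 E2].
      exists (- th ^ 2 * b / 2 + fst Dl), (th * A + snd Dl).
      split; [exact E1|]. split; [exact E2|].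
      assert (Hth3 : Rpower b (3/2 - e0) * Rabs th ^ 3 <= D).
      { unfold D. apply Rmult_le_compat_l. apply Rlt_le, exp_pos. apply pow_incr. rewrite Rabs_right by lra. lra. }
      split.
      + replace (- th ^ 2 * b / 2 + fst Dl - - (b * th ^ 2) / 2) with (fst Dl) by field.
        pose proof (re_le_Cmod' Dl). lra.
      + replace (th * A + snd Dl - th * A) with (snd Dl) by ring.
        pose proof (im_le_Cmod Dl). lra.
    - intros th Hth.
      eapply Rle_trans. apply rot_Cmod.
      change (Series (fun k => w k * cos (INR k * th)), Series (fun k => w k * sin (INR k * th))) with (Hc c t th).
      eapply Rle_trans. apply (H4 th Ht4); rewrite Rabs_right by lra; lra.
      rewrite HrS. fold H. apply Rmult_le_compat_r. apply Rlt_le, Rdiv_lt_0_compat; nra. apply Rle_abs. }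
  rewrite Ig_abs in Hcore'.
  set (y := Rabs (A - INR n)) in *.
  assert (Hy2 : (INR n - A)^2 = y^2) by (unfold y; rewrite pow2_abs; ring).
  rewrite Hy2.
  change (a n ^ 2 * exp (INR n * t)) with (w n).
  apply (final_arith b CG e0 K H (w n) y (Ig b dl y) (gf b dl) dl D); auto; try nra.
  - apply Ig_bound. nra. apply Rabs_pos.
  - apply gf_bound; nra.
Qed.
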